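(* Consider the infinite-horizon dynamic multi-agent system described in the context and suppose Assumption B holds. Let $\mathbf x(0)\in\mathcal X_0$ and let $(\boldsymbol\lambda^\ast,\mathbf U^\ast,\mathbf E^\ast)$ be an infinite-horizon competitive equilibrium for $\mathbf x(0)$. Then there exists a time $\bar N(\mathbf x(0))$ such that $\lambda^\ast_t=0$ for all $t>\bar N(\mathbf x(0))$.
   Context: Infinite-horizon dynamic multi-agent system: $n$ agents $\mathcal V=\{1,\dots,n\}$, time set $\mathcal T=\{0,1,2,\dots\}$. Agent $i$ has state $\mathbf x_i(t)\in\mathbb R^d$, input $\mathbf u_i(t)\in\mathbb R^m$, dynamics $\mathbf x_i(t+1)=\mathbf A_i\mathbf x_i(t)+\mathbf B_i\mathbf u_i(t)$, utility $f_i:\mathbb R^d\times\mathbb R^m\to\mathbb R$, resource consumption $h_i:\mathbb R^m\to\mathbb R$, excess resource $a_i(t)\in\mathbb R$, traded resource $e_i(t)\in\mathbb R$; $C(t)=\sum_ia_i(t)$; $\mathbf x(t)=(\mathbf x_1(t),\dots,\mathbf x_n(t))\in\mathbb R^{nd}$ with given $\mathbf x(0)$; $\mathbf U_i,\mathbf E_i$ denote the sequences $(\mathbf u_i(t))_{t\ge0}$, $(e_i(t))_{t\ge0}$, and $\mathbf U,\mathbf E$ their collections over all agents. Assumption B: (i) each $f_i$ is concave and negative definite, i.e. $f_i(\mathbf 0,\mathbf 0)=0$ and $f_i(\mathbf x,\mathbf u)<0$ for $(\mathbf x,\mathbf u)\ne(\mathbf 0,\mathbf 0)$; (ii) each $h_i$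 is non-negative and convex; (iii) $h_i(\mathbf 0)=0$; (iv) there is $C>0$ with $C(t)\ge C$ for all $t\ge0$. (Under (i) all series $\sum_t f_i$ converge in $[-\infty,0]$.) An infinite-horizon competitive equilibrium for $\mathbf x(0)$ is a triple $(\boldsymbol\lambda^\ast,\mathbf U^\ast,\mathbf E^\ast)$, $\boldsymbol\lambda^\ast=(\lambda^\ast_t)_{t\ge0}$, such that (i) for each $i$, $(\mathbf U_i^\ast,\mathbf E_i^\ast)$ attains a finite maximum of $\sum_{t=0}^\infty[f_i(\mathbf x_i(t),\mathbf u_i(t))+\lambda^\ast_te_i(t)]$ subject to the dynamics and $e_i(t)\le a_i(t)-h_i(\mathbf u_i(t))$ for all $t$; (ii) $\sum_{i=1}^ne_i^\ast(t)=0$ for all $t$. The infinite-horizon social welfare maximization problem for $\mathbf x(0)$: maximize $\sum_{i=1}^n\sum_{t=0}^\infty f_i(\mathbf x_i(t),\mathbf u_i(t))$ over $(\mathbf U,\mathbf E)$ subject to the dynamics, $e_i(t)\le a_i(t)-h_i(\mathbf u_i(t))$ and $\sum_{i=1}^ne_i(t)=0$ for all $t\ge0$. The set of feasible initial conditions $\mathcal X_0$ consists of those $\mathbf x(0)$ for which this problem has an admissible $(\mathbf U,\mathbf E)$ and finite optimal value. *)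

(* Defs.v *)
From HB Require Import structures.
From mathcomp Require Import all_boot all_order all_algebra.
From mathcomp Require Import all_classical all_reals all_analysis.
Set Implicit Arguments. Unset Strict Implicit. Unset Printing Implicit Defensive.
Import Order.TTheory GRing.Theory Num.Theory.
Import numFieldNormedType.Exports.
Local Open Scope ring_scope.
Local Open Scope classical_set_scope.

Fixpoint traj (R : realType) (d m : nat) (A : 'M[R]_d) (B : 'M[R]_(d, m))
  (x0 : 'cV[R]_d) (u : nat -> 'cV[R]_m) (t : nat) : 'cV[R]_d :=
  match t with
  | 0%N => x0
  | t'.+1 => A *m traj A B x0 u t' + B *m u t'
  end.

Definition concave_fun (R : realType) (d m : nat)
  (f : 'cV[R]_d -> 'cV[R]_m -> R) : Prop :=
  forall (x1 x2 : 'cV[R]_d) (u1 u2 : 'cV[R]_m) (s : R), 0 <= s <= 1 ->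
    s * f x1 u1 + (1 - s) * f x2 u2 <= f (s *: x1 + (1 - s) *: x2) (s *: u1 + (1 - s) *: u2).

Definition negative_definite (R : realType) (d m : nat)
  (f : 'cV[R]_d -> 'cV[R]_m -> R) : Prop :=
  f 0 0 = 0 /\ forall x u, (x, u) <> (0, 0) -> f x u < 0.

Definition convex_fun (R : realType) (m : nat) (h : 'cV[R]_m -> R) : Prop :=
  forall (u1 u2 : 'cV[R]_m) (s : R), 0 <= s <= 1 ->
    h (s *: u1 + (1 - s) *: u2) <= s * h u1 + (1 - s) * h u2.

Definition assumptionB (R : realType) (n d m : nat)
  (f : 'I_n -> 'cV[R]_d -> 'cV[R]_m -> R) (h : 'I_n -> 'cV[R]_m -> R)
  (a : 'I_n -> nat -> R) : Prop :=
  [/\ (forall i, concave_fun (f i) /\ negative_definite (f i)),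
      (forall i, (forall u, 0 <= h i u) /\ convex_fun (h i)),
      (forall i, h i 0 = 0) &
      exists Cmin : R, 0 < Cmin /\ forall t, Cmin <= \sum_(i < n) a i t].

Definition agent_feasible (R : realType) (m : nat) (hi : 'cV[R]_m -> R)
  (ai : nat -> R) (u : nat -> 'cV[R]_m) (e : nat -> R) : Prop :=
  forall t, e t <= ai t - hi (u t).

Definition agent_obj_partial (R : realType) (d m : nat)
  (fi : 'cV[R]_d -> 'cV[R]_m -> R) (Ai : 'M[R]_d) (Bi : 'M[R]_(d, m))
  (x0i : 'cV[R]_d) (lam : nat -> R) (u : nat -> 'cV[R]_m) (e : nat -> R)
  (N : nat) : R :=
  \sum_(0 <= t < N) (fi (traj Ai Bi x0i u t) (u t) + lam t * e t).

Definition competitive_equilibrium (R : realType) (n d m : nat)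
  (A : 'I_n -> 'M[R]_d) (B : 'I_n -> 'M[R]_(d, m))
  (f : 'I_n -> 'cV[R]_d -> 'cV[R]_m -> R) (h : 'I_n -> 'cV[R]_m -> R)
  (a : 'I_n -> nat -> R) (x0 : 'I_n -> 'cV[R]_d)
  (lam : nat -> R) (U : 'I_n -> nat -> 'cV[R]_m) (E : 'I_n -> nat -> R) : Prop :=
  (forall i : 'I_n,
     agent_feasible (h i) (a i) (U i) (E i) /\
     exists V : R,
       agent_obj_partial (f i) (A i) (B i) (x0 i) lam (U i) (E i) @ \oo --> V /\
       forall (u : nat -> 'cV[R]_m) (e : nat -> R) (l : \bar R),
         agent_feasible (h i) (a i) u e ->
         (fun N => (agent_obj_partial (f i) (A i) (B i) (x0 i) lam u e N)%:E)
           @ \oo --> l ->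
         (l <= V%:E)%E)
  /\ (forall t, \sum_(i < n) E i t = 0).

Definition sw_admissible (R : realType) (n m : nat)
  (h : 'I_n -> 'cV[R]_m -> R) (a : 'I_n -> nat -> R)
  (U : 'I_n -> nat -> 'cV[R]_m) (E : 'I_n -> nat -> R) : Prop :=
  (forall i, agent_feasible (h i) (a i) (U i) (E i)) /\
  (forall t, \sum_(i < n) E i t = 0).

Definition sw_value (R : realType) (n d m : nat)
  (A : 'I_n -> 'M[R]_d) (B : 'I_n -> 'M[R]_(d, m))
  (f : 'I_n -> 'cV[R]_d -> 'cV[R]_m -> R) (x0 : 'I_n -> 'cV[R]_d)
  (U : 'I_n -> nat -> 'cV[R]_m) : \bar R :=
  (\sum_(i < n) \sum_(0 <= t <oo) (f i (traj (A i) (B i) (x0 i) (U i) t) (U i t))%:E)%E.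

(* Feasible initial conditions X_0: an admissible plan exists and the optimal
   value (supremum of the welfare over admissible plans) is finite. *)
Definition feasible_init (R : realType) (n d m : nat)
  (A : 'I_n -> 'M[R]_d) (B : 'I_n -> 'M[R]_(d, m))
  (f : 'I_n -> 'cV[R]_d -> 'cV[R]_m -> R) (h : 'I_n -> 'cV[R]_m -> R)
  (a : 'I_n -> nat -> R) (x0 : 'I_n -> 'cV[R]_d) : Prop :=
  (exists U E, sw_admissible h a U E) /\
  ereal_sup [set v | exists U E, sw_admissible h a U E /\ v = sw_value A B f x0 U]
    \is a fin_num.

(* Main.v *)
Require Import Defs.
From HB Require Import structures.
From mathcomp Require Import all_boot all_order all_algebra.
From mathcomp Require Import all_classical all_reals all_analysis.
From mathcomp Require Import lra ring.
Set Implicit Arguments. Unset Strict Implicit. Unset Printing Implicit Defensive.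
Import Order.TTheory GRing.Theory Num.Theory.
Import numFieldNormedType.Exports.
Local Open Scope ring_scope.
Local Open Scope classical_set_scope.


Definition cvx (R : realType) (V : lmodType R) (phi : V -> R) :=
  forall a b (s : R), 0 <= s <= 1 ->
  phi (s *: a + (1 - s) *: b) <= s * phi a + (1 - s) * phi b.

Lemma jensen0 (R : realType) (V : lmodType R) (phi : V -> R) (I : eqType)
  (r : seq I) (l : I -> R) (v : I -> V) :
  cvx phi -> phi 0 = 0 -> (forall j, 0 <= l j) -> \sum_(j <- r) l j < 1 ->
  phi (\sum_(j <- r) l j *: v j) <= \sum_(j <- r) l j * phi (v j).
Proof.
move=> cp p0 l0; elim: r l l0 => [|j r IH] l l0.
  by rewrite !big_nil p0.
rewrite !big_cons => hs.
have hS : 0 <= \sum_(k <- r) l k by apply: sumr_ge0.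
have lj0 := l0 j.
have mu1 : l j < 1 by lra.
set T := (1 - l j).
have T0 : 0 < T by rewrite /T; lra.
pose l' := fun k => T^-1 * l k.
have l'0 : forall k, 0 <= l' k by move=> k; rewrite /l' mulr_ge0 // invr_ge0 ltW.
have hs' : \sum_(k <- r) l' k < 1.
  rewrite /l' -mulr_sumr ltr_pdivrMl // mulr1 /T; lra.
have IH' := IH l' l'0 hs'.
have eq1 : \sum_(k <- r) l k *: v k = T *: \sum_(k <- r) l' k *: v k.
  rewrite scaler_sumr; apply: eq_bigr => k _; rewrite scalerA /l' mulrA mulfV ?mul1r //.
  by rewrite gt_eqF.
have eq2 : \sum_(k <- r) l k * phi (v k) = T * \sum_(k <- r) l' k * phi (v k).
  rewrite mulr_sumr; apply: eq_bigr => k _; rewrite /l' mulrA mulrA mulfV ?mul1r //.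
  by rewrite gt_eqF.
rewrite eq1 eq2.
have h01 : 0 <= l j <= 1 by apply/andP; split; lra.
apply: le_trans (cp _ _ _ h01) _.
rewrite lerD2l /T ler_wpM2l //; lra.
Qed.

Lemma coord_le_norm (R : realType) k (w : 'rV[R]_k) j : `|w 0 j| <= `|w|.
Proof.
have /mapP[j' Hj ->] : `|w 0 j| \in [seq `|w x.1 x.2| | x : 'I_1 * 'I_k].
  by apply/mapP; exists (0, j) => //=; rewrite mem_enum.
by rewrite [leRHS]/Num.norm /= mx_normrE; apply/bigmax_geP; right => /=; exists j'.
Qed.

Lemma cvx_upper (R : realType) k (phi : 'rV[R]_k -> R) : cvx phi -> forall p : 'rV[R]_k,
  exists M : R, 0 <= M /\ forall w : 'rV[R]_k, \sum_j `|w 0 j| < 1 ->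
    phi (p + w) <= phi p + M * \sum_j `|w 0 j|.
Proof.
move=> cp p.
pose psi v := phi (p + v) - phi p.
have cpsi : cvx psi.
  move=> a b s hs; rewrite /psi.
  have -> : p + (s *: a + (1 - s) *: b) = s *: (p + a) + (1 - s) *: (p + b).
    by rewrite !scalerDr addrACA -scalerDl [s + _]addrC subrK scale1r.
  have := cp (p + a) (p + b) s hs.
  have -> : s * (phi (p + a) - phi p) + (1 - s) * (phi (p + b) - phi p)
     = s * phi (p + a) + (1 - s) * phi (p + b) - phi p by ring.
  lra.
have psi0 : psi 0 = 0 by rewrite /psi addr0 subrr.
pose M := \sum_(j < k) (`|psi (delta_mx 0 j)| + `|psi (- delta_mx 0 j)|).
exists M; split; first by apply: sumr_ge0 => j _; rewrite addr_ge0.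
move=> w hw.
pose sv j : 'rV[R]_k := if 0 <= w 0 j then delta_mx 0 j else - delta_mx 0 j.
have wE : w = \sum_(j < k) `|w 0 j| *: sv j.
  rewrite {1}[w]row_sum_delta; apply: eq_bigr => j _; rewrite /sv.
  case: ifP => h; first by rewrite ger0_norm.
  by rewrite ltr0_norm ?ltNge ?h // scaleNr scalerN opprK.
have J : psi w <= \sum_(j < k) `|w 0 j| * psi (sv j).
  rewrite {1}wE; exact: (jensen0 _ cpsi psi0).
have svM : forall j, psi (sv j) <= M.
  move=> j; apply: le_trans (ler_norm _) _.
  apply: (@le_trans _ _ (`|psi (delta_mx 0 j)| + `|psi (- delta_mx 0 j)|)).
    by rewrite /sv; case: ifP => _; [rewrite lerDl | rewrite lerDr].
  by rewrite /M (bigD1 j) //= lerDl; apply: sumr_ge0 => i _; rewrite addr_ge0.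
have J2 : \sum_(j < k) `|w 0 j| * psi (sv j) <= M * \sum_(j < k) `|w 0 j|.
  rewrite mulr_sumr; apply: ler_sum => j _; rewrite mulrC ler_wpM2r //.
have : psi w <= M * \sum_j `|w 0 j| by apply: le_trans J J2.
rewrite /psi; lra.
Qed.



Lemma sum_coord_le (R : realType) k (w : 'rV[R]_k) :
  \sum_j `|w 0 j| <= k%:R * `|w|.
Proof.
apply: (@le_trans _ _ (\sum_(j < k) `|w|)).
  by apply: ler_sum => j _; exact: coord_le_norm.
by rewrite sumr_const card_ord mulr_natl.
Qed.

Lemma cvx_cont (R : realType) k (phi : 'rV[R]_k -> R) : cvx phi -> continuous phi.
Proof.
move=> cp p.
have [M [M0 HM]] := cvx_upper cp p.
have key : forall z : 'rV[R]_k, `|z| < (k%:R + 1)^-1 ->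
    `|phi (p + z) - phi p| <= M * (k%:R * `|z|).
  move=> z hz.
  have Sz := sum_coord_le z.
  have k0 : 0 <= k%:R :> R by [].
  have n0 : 0 <= `|z| by [].
  have S1 : k%:R * `|z| < 1.
    have : (k%:R + 1) * `|z| < 1 by rewrite -ltr_pdivlMl ?mulr1 //; lra.
    nra.
  have SN : \sum_j `|(- z) 0 j| = \sum_j `|z 0 j|.
    by apply: eq_bigr => j _; rewrite mxE normrN.
  have h1 := HM z (le_lt_trans Sz S1).
  have h2 : phi (p + - z) <= phi p + M * \sum_j `|z 0 j|.
    by rewrite -SN; apply: HM; rewrite SN; exact: le_lt_trans Sz S1.
  have mid : phi p <= 2^-1 * phi (p + z) + (1 - 2^-1) * phi (p - z).
    have h01 : 0 <= (2^-1 : R) <= 1 by apply/andP; split; lra.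
    have := cp (p + z) (p - z) _ h01.
    have h2' : (1 - 2^-1 : R) = 2^-1 by lra.
    rewrite h2' -scalerDr addrACA subrr addr0 -mulr2n -scalerMnr scalerMnl.
    have -> : (2^-1 : R) *+ 2 = 1 by rewrite -mulr_natr; lra.
    by rewrite scale1r.
  have hS : M * \sum_j `|z 0 j| <= M * (k%:R * `|z|) by rewrite ler_wpM2l.
  rewrite ler_norml; apply/andP; split; lra.
move=> A /nbhs_ballP [e /= e0 HA]; apply/nbhs_ballP.
exists (Num.min (k%:R + 1)^-1 (e / (M * k%:R + 1))).
  by rewrite /= lt_min !divr_gt0 ?invr_gt0 ?ltr_pwDr ?mulr_ge0 ?ltr01 //; lra.
move=> w; rewrite -ball_normE /= lt_min => /andP [hw1 hw2].
apply: HA; rewrite -ball_normE /=.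
have wE : w = p + (w - p) by rewrite addrC subrK.
have dE : `|p - w| = `|w - p| by rewrite distrC.
rewrite dE in hw1 hw2.
have := key _ hw1; rewrite -wE distrC => h.
have Mk0 : 0 <= M * k%:R by rewrite mulr_ge0.
have : (M * k%:R + 1) * `|w - p| < e by rewrite -ltr_pdivlMl //; lra.
have : 0 <= `|w - p| by [].
rewrite mulrA in h; nra.
Qed.



Lemma cvx_far (R : realType) k (G : 'rV[R]_k -> R) : cvx G -> G 0 = 0 ->
  (forall w, w != 0 -> 0 < G w) -> forall r : R, 0 < r ->
  exists c : R, 0 < c /\ forall w : 'rV[R]_k, r <= `|w| -> c <= G w.
Proof.
move=> cG G0 Gpos r r0.
pose K := [set w : 'rV[R]_k | `|w| = r].
have scal : forall w : 'rV[R]_k, r <= `|w| ->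
    K ((r / `|w|) *: w) /\ G ((r / `|w|) *: w) <= G w.
  move=> w hw.
  have w0 : 0 < `|w| by apply: lt_le_trans hw.
  have wn0 : w != 0 by rewrite -normr_gt0.
  have s0 : 0 <= r / `|w| <= 1.
    by apply/andP; split; [rewrite divr_ge0 // ltW | rewrite ler_pdivrMr // mul1r].
  split.
    rewrite /K /= mx_normZ ger0_norm ?divr_ge0 ?ltW // -mulrA mulVf ?mulr1 //.
    by rewrite gt_eqF.
  have := cG w 0 _ s0; rewrite scaler0 addr0 G0 mulr0 addr0 => h.
  apply: le_trans h _.
  have := Gpos _ wn0; move: s0 => /andP [s1 s2].
  nra.
have [[x0 Kx0]|K0] := pselect (K !=set0); last first.
  exists 1; split => // w hw; exfalso; apply: K0.
  by exists ((r / `|w|) *: w); case: (scal w hw).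
have cK : compact K.
  apply: bounded_closed_compact.
    exists r; split; first exact: num_real.
    by move=> M hM x /= ->; apply: ltW.
  have -> : K = (fun w : 'rV[R]_k => `|w|) @^-1` [set x | x = r] by [].
  apply: preimage_closed; last exact: closed_eq.
  by move=> x _; apply: norm_continuous.
have [c cKc cmin] := EVT_min_rV (ex_intro _ x0 Kx0) cK
  (continuous_subspaceT (cvx_cont cG)).
exists (G c); split.
  apply: Gpos; rewrite -normr_gt0.
  by move: cKc; rewrite inE /K /= => ->.
move=> w hw; have [hK hG] := scal w hw.
by apply: le_trans hG; apply: cmin; rewrite inE.
Qed.



Lemma agent_bound (R : realType) d m (f : 'cV[R]_d -> 'cV[R]_m -> R)
  (h : 'cV[R]_m -> R) : concave_fun f -> negative_definite f -> convex_fun h ->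
  h 0 = 0 -> forall eps : R, 0 < eps ->
  exists c : R, 0 < c /\ forall x u, eps <= h u -> f x u <= - c.
Proof.
move=> cf [f0 fneg] ch h0 eps eps0.
pose H (v : 'rV[R]_m) := h (v^T).
have cH : cvx H.
  by move=> a b s hs; rewrite /H linearD !linearZ /=; apply: ch.
have H0 : H 0 = 0 by rewrite /H trmx0.
have [M [M0 HM]] := cvx_upper cH 0.
pose K : R := m%:R.
pose t := eps / (M + eps).
pose r := t / (K + 1).
have K0 : 0 <= K by [].
have Me0 : 0 < M + eps by lra.
have t0 : 0 < t by rewrite divr_gt0.
have ht : t * (M + eps) = eps by rewrite /t divfK // gt_eqF.
have r0 : 0 < r by rewrite /r divr_gt0 //; lra.
have hr : r * (K + 1) = t by rewrite /r divfK // gt_eqF //; lra.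
have smallH : forall v : 'rV[R]_m, `|v| <= r -> H v < eps.
  move=> v hv.
  have Sv := sum_coord_le v.
  have Sv2 : \sum_j `|v 0 j| <= K * r by apply: le_trans Sv _; rewrite ler_wpM2l.
  have t1 : t <= 1 by nra.
  have Kr1 : K * r < 1 by nra.
  have := HM v (le_lt_trans Sv2 Kr1); rewrite add0r H0 => h1.
  have h2 : M * \sum_j `|v 0 j| <= M * (K * r) by rewrite ler_wpM2l.
  nra.
pose G (w : 'rV[R]_(d + m)) := - f (lsubmx w)^T (rsubmx w)^T.
have cG : cvx G.
  move=> a b s hs; rewrite /G !linearD !linearZ /=.
  have := cf (lsubmx a)^T (lsubmx b)^T (rsubmx a)^T (rsubmx b)^T s hs; lra.
have G0 : G 0 = 0 by rewrite /G linear0 trmx0 linear0 trmx0 f0 oppr0.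
have Gpos : forall w, w != 0 -> 0 < G w.
  move=> w wn0; rewrite /G oppr_gt0; apply: fneg => -[e1 e2].
  move/negP: wn0; apply; apply/eqP.
  rewrite -[w]hsubmxK.
  have -> : lsubmx w = 0 by apply: trmx_inj; rewrite e1 trmx0.
  have -> : rsubmx w = 0 by apply: trmx_inj; rewrite e2 trmx0.
  by rewrite row_mx0.
have [c [c0 hc]] := cvx_far cG G0 Gpos r0.
exists c; split => // x u hu.
have hv : r < `|u^T|.
  rewrite ltNge; apply/negP => /smallH; rewrite /H trmxK; lra.
have nz : `|u^T| != 0 by rewrite gt_eqF //; apply: lt_trans hv.
have [[i j] hij] := mx_norm_neq0 nz.
pose w := row_mx x^T u^T.
have Gw : G w = - f x u by rewrite /G row_mxKl row_mxKr !trmxK.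
have : r <= `|w|.
  apply: ltW; apply: (lt_le_trans hv).
  have -> : `|u^T| = `|w 0 (rshift d j)|.
    have e : `|u^T| = `|u^T 0 j| by rewrite /= (ord1 i) in hij; exact: hij.
    by rewrite e /w row_mxEr.
  exact: coord_le_norm.
move/hc; rewrite Gw; lra.
Qed.



Lemma deviation (R : realType) d m (fi : 'cV[R]_d -> 'cV[R]_m -> R)
  (hi : 'cV[R]_m -> R) (ai : nat -> R) (Ai : 'M[R]_d) (Bi : 'M[R]_(d, m))
  (x0i : 'cV[R]_d) (lam : nat -> R) (u : nat -> 'cV[R]_m) (e : nat -> R) (V : R) :
  agent_feasible hi ai u e ->
  agent_obj_partial fi Ai Bi x0i lam u e @ \oo --> V ->
  (forall (u' : nat -> 'cV[R]_m) (e' : nat -> R) (l : \bar R),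
     agent_feasible hi ai u' e' ->
     (fun N => (agent_obj_partial fi Ai Bi x0i lam u' e' N)%:E) @ \oo --> l ->
     (l <= V%:E)%E) ->
  forall t (del : R), e t + del <= ai t - hi (u t) -> lam t * del <= 0.
Proof.
move=> feas hV hopt t del hdel.
pose e' s := if s == t then e s + del else e s.
have feas' : agent_feasible hi ai u e'.
  by move=> s; rewrite /e'; case: eqP => [->|_] //; exact: feas.
have objE : forall N, agent_obj_partial fi Ai Bi x0i lam u e' N =
    agent_obj_partial fi Ai Bi x0i lam u e N + (if (t < N)%N then lam t * del else 0).
  elim=> [|N IH].
    by rewrite /agent_obj_partial !big_geq // addr0.
  rewrite /agent_obj_partial !big_nat_recr //= -/(agent_obj_partial _ _ _ _ _ _ _ N).
  rewrite -/(agent_obj_partial fi Ai Bi x0i lam u e N) IH /e' ltnS.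
  by case: (ltngtP t N) => [tN|Nt|->] /=; ring.
have cv : (fun N => (agent_obj_partial fi Ai Bi x0i lam u e' N)%:E) @ \oo
    --> (V + lam t * del)%:E.
  apply: cvg_EFin; first by near=> N.
  apply: cvg_trans (near_eq_cvg _) _; last first.
    exact: (cvgD hV (cvg_cst (lam t * del))).
  near=> N; rewrite /= objE.
  have -> : (t < N)%N by near: N; exists t.+1 => // k /=.
  by [].
have := hopt u e' _ feas' cv; rewrite lee_fin; lra.
Unshelve. all: end_near.
Qed.



Theorem theorem8 (R : realType) (n d m : nat)
  (A : 'I_n -> 'M[R]_d) (B : 'I_n -> 'M[R]_(d, m))
  (f : 'I_n -> 'cV[R]_d -> 'cV[R]_m -> R) (h : 'I_n -> 'cV[R]_m -> R)
  (a : 'I_n -> nat -> R) (x0 : 'I_n -> 'cV[R]_d)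
  (lam : nat -> R) (U : 'I_n -> nat -> 'cV[R]_m) (E : 'I_n -> nat -> R) :
  assumptionB f h a ->
  feasible_init A B f h a x0 ->
  competitive_equilibrium A B f h a x0 lam U E ->
  exists Nbar : nat, forall t : nat, (Nbar < t)%N -> lam t = 0.
Proof.
move=> [Hf Hh Hh0 [Cmin [Cmin0 HC]]] _ [Heq Hclear].
have /choice [V HV] : forall i, exists V : R,
    agent_obj_partial (f i) (A i) (B i) (x0 i) lam (U i) (E i) @ \oo --> V /\
    forall (u : nat -> 'cV[R]_m) (e : nat -> R) (l : \bar R),
      agent_feasible (h i) (a i) u e ->
      (fun N => (agent_obj_partial (f i) (A i) (B i) (x0 i) lam u e N)%:E)
        @ \oo --> l -> (l <= V%:E)%E.
  by move=> i; case: (Heq i).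
have feas : forall i, agent_feasible (h i) (a i) (U i) (E i) by move=> i; case: (Heq i).
have dev : forall i t del, E i t + del <= a i t - h i (U i t) -> lam t * del <= 0.
  move=> i t del; case: (HV i) => hV hopt.
  exact: (deviation (feas i) hV hopt).
have npos : (0 < n)%N.
  case: (posnP n) => [n0|//]; exfalso.
  have : \sum_(i < n) a i 0%N = 0.
    by apply: big1 => -[i hi] _; exfalso; rewrite n0 in hi.
  have := HC 0%N; lra.
have lam0 : forall t, 0 <= lam t.
  move=> t; pose i0 : 'I_n := Ordinal npos.
  have := dev i0 t (-1); have := feas i0 t; lra.
have bind : forall t, lam t != 0 -> forall i, E i t = a i t - h i (U i t).
  move=> t lt i.
  have lp : 0 < lam t by rewrite lt_def lt lam0.
  have hd : E i t + (a i t - h i (U i t) - E i t) <= a i t - h i (U i t) by lra.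
  have := dev i t _ hd.
  have := feas i t; nra.
have nR : 0 < n%:R :> R by rewrite ltr0n.
pose eps := Cmin / (2 * n%:R).
have eps0 : 0 < eps by rewrite /eps divr_gt0 // mulr_gt0.
have neps : n%:R * eps = Cmin / 2.
  have nne : n%:R != 0 :> R by rewrite gt_eqF.
  rewrite /eps; field; rewrite ?nne ?andbT //=.
have /choice [cf hcf] : forall i, exists c : R, 0 < c /\
    forall x u, eps <= h i u -> f i x u <= - c.
  move=> i; have [cc hn] := Hf i; have [_ ch] := Hh i.
  exact: (agent_bound cc hn ch (Hh0 i) eps0).
pose S := \sum_i (cf i)^-1.
have S0 : 0 < S.
  rewrite /S (bigD1 (Ordinal npos)) //= ltr_pwDl //.
    by rewrite invr_gt0; case: (hcf (Ordinal npos)).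
  by apply: sumr_ge0 => i _; rewrite invr_ge0 ltW //; case: (hcf i).
pose c := S^-1.
have c0 : 0 < c by rewrite invr_gt0.
have cle : forall i, c <= cf i.
  move=> i; have [ci _] := hcf i.
  rewrite /c -[cf i]invrK lef_pV2 ?posrE ?invr_gt0 //.
  rewrite /S (bigD1 i) //= lerDl; apply: sumr_ge0 => j _; rewrite invr_ge0 ltW //.
  by case: (hcf j).
have fle0 : forall i x u, f i x u <= 0.
  move=> i x u; have [_ [f0 fneg]] := Hf i.
  case: (pselect ((x, u) = (0, 0))) => [[-> ->]|ne]; first by rewrite f0.
  exact/ltW/fneg.
pose F t := \sum_i f i (traj (A i) (B i) (x0 i) (U i) t) (U i t).
have Fle0 : forall t, F t <= 0 by move=> t; apply: sumr_le0 => i _; exact: fle0.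
have Fc : forall t, lam t != 0 -> F t <= - c.
  move=> t lt.
  have sh : Cmin <= \sum_i h i (U i t).
    have : \sum_i E i t = \sum_i (a i t - h i (U i t)).
      by apply: eq_bigr => i _; exact: bind.
    rewrite Hclear sumrB => h1; have := HC t; lra.
  have [i hi] : exists i, eps <= h i (U i t).
    case: (pselect (exists i, eps <= h i (U i t))) => // Hn; exfalso.
    have : \sum_i h i (U i t) <= \sum_(i < n) eps.
      apply: ler_sum => i _; rewrite leNgt; apply/negP => hlt; apply: Hn.
      by exists i; exact: ltW.
    rewrite sumr_const card_ord -mulr_natl neps; lra.
  have hfi := (hcf i).2 (traj (A i) (B i) (x0 i) (U i) t) _ hi.
  rewrite /F (bigD1 i) //=.
  have : \sum_(j | j != i) f j (traj (A j) (B j) (x0 j) (U j) t) (U j t) <= 0.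
    by apply: sumr_le0 => j _; exact: fle0.
  have := cle i; lra.
pose P N := \sum_(0 <= s < N) F s.
have sumE : forall N,
    \sum_i agent_obj_partial (f i) (A i) (B i) (x0 i) lam (U i) (E i) N = P N.
  move=> N; rewrite /agent_obj_partial /P exchange_big /=; apply: eq_bigr => s _.
  by rewrite big_split /= -mulr_sumr Hclear mulr0 addr0.
have ev : \forall N \near \oo, forall i,
    V i - 1 <= agent_obj_partial (f i) (A i) (B i) (x0 i) lam (U i) (E i) N.
  apply: filter_forall => i; apply: cvgr_ge; first exact: (HV i).1.
  lra.
have [N0 _ HN0] := ev.
pose L := \sum_i (V i - 1).
have Plow : forall N, (N0 <= N)%N -> L <= P N.
  move=> N hN; rewrite -sumE; apply: ler_sum => i _; exact: (HN0 N hN i).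
have Pmono : forall N N', (N <= N')%N -> P N' <= P N.
  move=> N N' hNN; rewrite /P (@big_cat_nat _ _ _ N 0 N') //= gerDl.
  by apply: sumr_le0 => s _; exact: Fle0.
case: (pselect (exists Nbar, forall t, (Nbar < t)%N -> lam t = 0)) => // Hno.
exfalso.
have inf : forall N, exists t, (N < t)%N /\ lam t != 0.
  move=> N; case: (pselect (exists t, (N < t)%N /\ lam t != 0)) => // H2.
  exfalso; apply: Hno; exists N => t Nt; case: (eqVneq (lam t) 0) => // ne.
  by exfalso; apply: H2; exists t.
have down : forall K : nat, exists N, P N <= - (K%:R * c).
  elim=> [|K [N hN]]; first by exists 0%N; rewrite /P big_geq // mul0r oppr0.
  have [t [Nt lt]] := inf N.
  exists t.+1.
  have hsum : \sum_(N <= s < t) F s <= 0 by apply: sumr_le0 => s _; exact: Fle0.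
  have : P t.+1 <= P N + F t.
    rewrite /P (@big_cat_nat _ _ _ N 0 t.+1) //=; last by apply: leqW; apply: ltnW.
    rewrite big_nat_recr /=; last exact: ltnW.
    lra.
  have := Fc t lt.
  rewrite -[K.+1]addn1 natrD mulrDl mul1r; lra.
have L0 : 0 <= `|L| / c by rewrite divr_ge0 // ltW.
have hb := archi_boundP L0.
have [N hN] := down (Num.bound (`|L| / c)).
have h1 := Plow (maxn N N0) (leq_maxr _ _).
have h2 := Pmono N (maxn N N0) (leq_maxl _ _).
have : `|L| < (Num.bound (`|L| / c))%:R * c by rewrite -ltr_pdivrMr.
have := ler_norm (- L); rewrite normrN.
lra.
Qed.
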